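(* Let $\Delta$ be a thick building of type $\mathsf{A}_n$ and let $\theta$ be a domestic collineation of $\Delta$. If there exists a simplex of type $\{i,n-i+1\}$ mapped to an opposite simplex by $\theta$, then there exists a simplex of type $\{j,n-j+1\mid 1\leq j\leq i\}$ mapped to an opposite simplex by $\theta$.
   Context: Types of $\mathsf{A}_n$ are $1,\ldots,n$ along the path Coxeter graph. A collineation is a type-preserving automorphism. Simplices $\alpha,\beta$ are opposite if every chamber containing either is opposite (at maximal gallery distance from) some chamber containing the other. $\theta$ is domestic if no chamber is mapped to an opposite chamber. *)

(* Defs.v *)
(* Buildings of type A_n as W-metric buildings
   (Abramenko--Brown, Def. 5.1) with Weyl group W = 'S_(n+1) and
   generators the adjacent transpositions s_1,...,s_n. *)
From mathcomp Require Import all_boot all_order all_fingroup.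
Set Implicit Arguments. Unset Strict Implicit. Unset Printing Implicit Defensive.
Local Open Scope group_scope.

Definition sgen (n k : nat) : 'S_n.+1 := tperm (inord k.-1) (inord k).

Definition is_gen (n k : nat) : bool := (1 <= k <= n)%N.

Definition word_len (n : nat) (w : 'S_n.+1) (m : nat) : Prop :=
  (exists ks : seq nat, size ks = m /\ all (is_gen n) ks /\
      \prod_(k <- ks) sgen n k = w) /\
  (forall ks : seq nat, all (is_gen n) ks -> \prod_(k <- ks) sgen n k = w ->
      (m <= size ks)%N).

Definition w0 (n : nat) : 'S_n.+1 := perm (@rev_ord_inj n.+1).

Definition is_building (n : nat) (C : Type) (delta : C -> C -> 'S_n.+1) : Prop :=
  inhabited C /\
  (forall x y, delta x y = 1 <-> x = y) /\
  (forall x y x' k, is_gen n k -> delta x' x = sgen n k ->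
      (delta x' y = sgen n k * delta x y \/ delta x' y = delta x y) /\
      (forall m, word_len (delta x y) m -> word_len (sgen n k * delta x y) m.+1 ->
          delta x' y = sgen n k * delta x y)) /\
  (forall x y k, is_gen n k -> exists x',
      delta x' x = sgen n k /\ delta x' y = sgen n k * delta x y).

(* thick: every panel contains at least three chambers *)
Definition thick (n : nat) (C : Type) (delta : C -> C -> 'S_n.+1) : Prop :=
  forall x k, is_gen n k -> exists y z,
    y <> z /\ delta x y = sgen n k /\ delta x z = sgen n k.

Definition opp_ch (n : nat) (C : Type) (delta : C -> C -> 'S_n.+1) (x y : C) :=
  delta x y = w0 n.

Definition Wpar (n : nat) (K : pred nat) : {group 'S_n.+1} :=
  <<[set sgen n k | k : 'I_n.+1 & (0 < (k : nat))%N && K k]>>%G.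

(* a simplex of type J (J a set of types in {1..n}) is the set of chambers
   containing it, i.e. a residue of type {1..n} \ J *)
Definition is_simplex (n : nat) (C : Type) (delta : C -> C -> 'S_n.+1)
    (J : pred nat) (A : C -> Prop) : Prop :=
  exists c, A c /\ forall d, A d <-> delta c d \in Wpar n (fun k => k \notin J).

Definition opp_simplex (n : nat) (C : Type) (delta : C -> C -> 'S_n.+1)
    (A B : C -> Prop) : Prop :=
  (forall x, A x -> exists y, B y /\ opp_ch delta x y) /\
  (forall y, B y -> exists x, A x /\ opp_ch delta y x).

(* type-preserving automorphism *)
Definition collineation (n : nat) (C : Type) (delta : C -> C -> 'S_n.+1)
    (theta : C -> C) : Prop :=
  bijective theta /\ forall x y, delta (theta x) (theta y) = delta x y.

Definition domestic (n : nat) (C : Type) (delta : C -> C -> 'S_n.+1)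
    (theta : C -> C) : Prop :=
  forall x, ~ opp_ch delta x (theta x).

Definition img (C : Type) (theta : C -> C) (A : C -> Prop) : C -> Prop :=
  fun y => exists x, A x /\ y = theta x.

Definition type_pair (n i : nat) : pred nat :=
  fun k => (k == i) || (k == n.+1 - i)%N.

Definition type_upto (n i : nat) : pred nat :=
  fun k => has (fun j => (k == j) || (k == n.+1 - j)%N) (iota 1 i).

(* Main.v *)
Require Import Defs.
From mathcomp Require Import all_boot all_order all_fingroup.
From mathcomp Require Import zify.
Set Implicit Arguments. Unset Strict Implicit. Unset Printing Implicit Defensive.

Section Cox.
Variable n : nat.
Local Open Scope group_scope.

Definition gw (ks : seq nat) : 'S_n.+1 := \prod_(k <- ks) sgen n k.

Definition inv (w : 'S_n.+1) : nat :=
  \sum_(pq : 'I_n.+1 * 'I_n.+1) ((pq.1 < pq.2)%N && (w pq.2 < w pq.1)%N).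

Lemma inordV (k : nat) : (k <= n)%N -> ((inord k : 'I_n.+1) : nat) = k.
Proof. by move=> h; rewrite inordK. Qed.

Lemma sgenK k : sgen n k * sgen n k = 1.
Proof. exact: tperm2. Qed.

Lemma sgenV k : (sgen n k)^-1 = sgen n k.
Proof. exact: tpermV. Qed.

Lemma tperm_lt k (hk : is_gen n k) (p q : 'I_n.+1) :
  ~~ ((p == inord k.-1 :> 'I_n.+1) && (q == inord k)) ->
  ~~ ((p == inord k :> 'I_n.+1) && (q == inord k.-1)) ->
  (tperm (inord k.-1 : 'I_n.+1) (inord k) p < tperm (inord k.-1 : 'I_n.+1) (inord k) q)%N = (p < q)%N.
Proof.
move: hk; rewrite /is_gen => /andP [h1 h2].
have ea := @inordV k.-1 ltac:(lia). have eb := @inordV k h2.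
have E : forall x y : 'I_n.+1, (x == y) = (x == y :> nat) by [].
rewrite !E ea eb.
case: tpermP => [->|->|n1 n2]; case: tpermP => [->|->|m1 m2];
  rewrite ?ea ?eb /= => H1 H2;
  repeat match goal with H : ~ (_ = _) |- _ => move/eqP: H end;
  rewrite ?E ?ea ?eb => *; apply/idP/idP; lia.
Qed.



Lemma inv_step k (hk : is_gen n k) (w : 'S_n.+1) :
  let a : 'I_n.+1 := inord k.-1 in let b : 'I_n.+1 := inord k in
  (inv (sgen n k * w) + (w b < w a) = inv w + (w a < w b))%N.
Proof.
move=> a b.
have ab : a != b.
  move: hk; rewrite /is_gen => /andP [h1 h2].
  apply/eqP => /(congr1 val) /=; rewrite !inordV //; lia.
set s := sgen n k.
have hs : s = tperm a b by [].
have sinj : injective (fun pq : 'I_n.+1 * 'I_n.+1 => (s pq.1, s pq.2)).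
  by move=> [p q] [p' q'] /= [] /perm_inj -> /perm_inj ->.
rewrite /inv (reindex_inj sinj) /=.
have -> : \sum_(pq : 'I_n.+1 * 'I_n.+1) ((s pq.1 < s pq.2)%N && ((s * w)%g (s pq.2) < (s * w)%g (s pq.1))%N)
   = \sum_(pq : 'I_n.+1 * 'I_n.+1) ((s pq.1 < s pq.2)%N && (w pq.2 < w pq.1)%N).
  by apply: eq_bigr => pq _; rewrite !permM hs !tpermK.
rewrite (bigD1 (a, b)) //= (bigD1 (b, a)) /=; last by rewrite xpair_eqE (negbTE ab) andbF.
rewrite [in RHS](bigD1 (a, b)) //= [in RHS](bigD1 (b, a)) /=; last by rewrite xpair_eqE (negbTE ab) andbF.
have va : (a : nat) = k.-1 by rewrite inordV //; move: hk => /andP[]; lia.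
have vb : (b : nat) = k by rewrite inordV //; move: hk => /andP[].
rewrite hs tpermL tpermR va vb.
have -> : \sum_(i | (i != (a, b)) && (i != (b, a))) ((tperm a b i.1 < tperm a b i.2)%N && (w i.2 < w i.1)%N)
   = \sum_(i | (i != (a, b)) && (i != (b, a))) ((i.1 < i.2)%N && (w i.2 < w i.1)%N).
  apply: eq_bigr => pq /andP [h1 h2]; case: pq h1 h2 => p q h1 h2 /=; rewrite tperm_lt //.
have -> : (k < k.-1)%N = false by lia.
have -> : (k.-1 < k)%N = true by move: hk => /andP[]; lia.
rewrite /=. set S := (\sum_(i | _) _). set X := nat_of_bool (w a < w b). set Y := nat_of_bool (w b < w a). lia.
Qed.


Lemma gen_ab k (hk : is_gen n k) :
  ((inord k.-1 : 'I_n.+1) : nat) = k.-1 /\ ((inord k : 'I_n.+1) : nat) = k.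
Proof. move: hk => /andP [h1 h2]; split; apply: inordV; lia. Qed.

Lemma inv_up k (hk : is_gen n k) (w : 'S_n.+1) :
  (w (inord k.-1) < w (inord k))%N -> inv (sgen n k * w) = (inv w).+1.
Proof.
move=> h; have := inv_step hk w => /=.
have -> : (w (inord k) < w (inord k.-1))%N = false by apply/negbTE; rewrite -leqNgt ltnW.
rewrite h /=; lia.
Qed.

Lemma inv_down k (hk : is_gen n k) (w : 'S_n.+1) :
  (w (inord k) < w (inord k.-1))%N -> (inv (sgen n k * w)).+1 = inv w.
Proof.
move=> h; have := inv_step hk w => /=.
have -> : (w (inord k.-1) < w (inord k))%N = false by apply/negbTE; rewrite -leqNgt ltnW.
rewrite h /=; lia.
Qed.

Lemma ab_neq k (hk : is_gen n k) (w : 'S_n.+1) :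
  (w (inord k.-1) : nat) != w (inord k).
Proof.
apply/eqP => /val_inj /perm_inj /(congr1 (@nat_of_ord _)) E.
have [h1 h2] := gen_ab hk; rewrite h1 h2 in E; move: hk => /andP []; lia.
Qed.

Lemma inv_le k (hk : is_gen n k) (w : 'S_n.+1) : (inv (sgen n k * w) <= (inv w).+1)%N.
Proof.
have := ab_neq hk w; rewrite neq_ltn => /orP [h|h].
  by rewrite inv_up.
by rewrite -(inv_down hk h); lia.
Qed.

Lemma mono_id (f : nat -> nat) lo hi :
  (forall p, (lo <= p <= hi)%N -> (lo <= f p <= hi)%N) ->
  (forall p, (lo < p <= hi)%N -> (f p.-1 < f p)%N) ->
  forall p, (lo <= p <= hi)%N -> f p = p.
Proof.
move=> H1 H2.
have L : forall d, (lo + d <= hi)%N -> (lo + d <= f (lo + d))%N.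
  elim=> [|d IH] h; first by have := H1 (lo + 0); lia.
  have := H2 (lo + d.+1); have := IH ltac:(lia).
  have -> : (lo + d.+1).-1 = lo + d by lia.
  lia.
have U : forall d, (d <= hi - lo)%N -> (lo <= hi)%N -> (f (hi - d) <= hi - d)%N.
  elim=> [|d IH] h h'; first by have := H1 (hi - 0); lia.
  have := H2 (hi - d); have := IH ltac:(lia) h'.
  have -> : (hi - d).-1 = hi - d.+1 by lia.
  lia.
move=> p hp; have := L (p - lo) ltac:(lia); have := U (hi - p) ltac:(lia) ltac:(lia).
have -> : lo + (p - lo) = p by lia.
have -> : hi - (hi - p) = p by lia.
lia.
Qed.

Lemma inv_desc (w : 'S_n.+1) : w != 1 ->
  exists k, is_gen n k /\ (w (inord k) < w (inord k.-1))%N.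
Proof.
move=> hw.
have : ~~ [forall k : 'I_n.+1, (0 < k)%N ==> (w (inord k.-1) < w (inord k))%N].
  apply: contra hw => /forallP H; apply/eqP/permP => x; rewrite perm1; apply: val_inj => /=.
  have := @mono_id (fun p => nat_of_ord (w (inord p))) 0 n _ _ x.
  rewrite inord_val => -> //; last by rewrite /= -ltnS ltn_ord.
    by move=> p _; rewrite /= -ltnS ltn_ord.
  move=> p /andP [h1 h2]; have := H (inord p); rewrite inordV // h1 /=.
  done.
rewrite negb_forall => /existsP [k]; rewrite negb_imply => /andP [k0 hk].
have gk : is_gen n k by rewrite /is_gen k0 -ltnS ltn_ord.
exists k; split => //.
have := ab_neq gk w; rewrite neq_ltn => /orP [h|//].
by rewrite h in hk.
Qed.

Lemma inv1 : inv 1 = 0.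
Proof. by rewrite /inv big1 // => pq _; rewrite !perm1; case: (ltnP pq.1 pq.2) => h //=; rewrite ltnNge ltnW. Qed.

Lemma inv_eq0 (w : 'S_n.+1) : inv w = 0 -> w = 1.
Proof.
move=> h; apply/eqP; apply/negPn/negP => /inv_desc [k [hk hd]].
by have := inv_down hk hd; rewrite h.
Qed.

Lemma gw_cons k ks : gw (k :: ks) = sgen n k * gw ks.
Proof. by rewrite /gw big_cons. Qed.

Lemma gw_nil : gw [::] = 1.
Proof. by rewrite /gw big_nil. Qed.

Lemma red_word (w : 'S_n.+1) :
  exists ks, [/\ all (is_gen n) ks, size ks = inv w & gw ks = w].
Proof.
move: {2}(inv w) (erefl (inv w)) => m; elim: m w => [|m IH] w hm.
  by exists [::]; split; rewrite ?gw_nil ?hm ?(inv_eq0 hm).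
have w1 : w != 1 by apply/eqP => e; rewrite e inv1 in hm.
have [k [hk hd]] := inv_desc w1.
have := inv_down hk hd; rewrite hm => -[] e; have [ks [h1 h2 h3]] := IH _ e.
exists (k :: ks); split => /=; first by rewrite hk h1.
  by rewrite h2 e.
by rewrite gw_cons h3 mulgA sgenK mul1g.
Qed.

Lemma word_bound ks : all (is_gen n) ks -> (inv (gw ks) <= size ks)%N.
Proof.
elim: ks => [|k ks IH] /=; first by rewrite gw_nil inv1.
move=> /andP [hk /IH h]; rewrite gw_cons; have := inv_le hk (gw ks); lia.
Qed.

Lemma word_len_inv (w : 'S_n.+1) : word_len w (inv w).
Proof.
split; first by have [ks [h1 h2 h3]] := red_word w; exists ks.
by move=> ks hks <-; apply: word_bound.
Qed.

Lemma gw_rcons ks k : gw (rcons ks k) = gw ks * sgen n k.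
Proof. by rewrite /gw big_rcons. Qed.

Lemma gw_rev ks : gw (rev ks) = (gw ks)^-1.
Proof.
elim: ks => [|k ks IH]; first by rewrite gw_nil invg1.
by rewrite rev_cons gw_rcons IH gw_cons invMg sgenV.
Qed.

Lemma inv_invg (w : 'S_n.+1) : inv w^-1 = inv w.
Proof.
suff H : forall w : 'S_n.+1, (inv w^-1 <= inv w)%N.
  by apply/eqP; rewrite eqn_leq H /=; have := H w^-1; rewrite invgK.
move=> v; have [ks [h1 h2 h3]] := red_word v.
by rewrite -h2 -h3 -gw_rev; rewrite -size_rev; apply: word_bound; rewrite all_rev.
Qed.

End Cox.

Section Bld.
Variables (n : nat) (C : Type) (delta : C -> C -> 'S_n.+1).
Hypothesis Hb : is_building delta.
Local Open Scope group_scope.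
Local Notation s := (sgen n).

Lemma wd1 x y : delta x y = 1 <-> x = y.
Proof. by case: Hb => _ [h _]. Qed.

Lemma drefl x : delta x x = 1.
Proof. by apply/wd1. Qed.

Lemma wd2 x y x' k : is_gen n k -> delta x' x = s k ->
  delta x' y = s k * delta x y \/ delta x' y = delta x y.
Proof. by case: Hb => _ [_ [h _]] hk e; have [] := h x y x' k hk e. Qed.

Lemma wd3 x y k : is_gen n k -> exists x', delta x' x = s k /\ delta x' y = s k * delta x y.
Proof. by case: Hb => _ [_ [_ h]]; apply: h. Qed.

Lemma ascent_of k (hk : is_gen n k) (w : 'S_n.+1) :
  inv (s k * w) = (inv w).+1 -> (w (inord k.-1) < w (inord k))%N.
Proof.
move=> h; have := ab_neq hk w; rewrite neq_ltn => /orP [//|hd].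
by have := inv_down hk hd; rewrite h; lia.
Qed.

Lemma wd2_up x y x' k : is_gen n k -> delta x' x = s k ->
  (delta x y (inord k.-1) < delta x y (inord k))%N -> delta x' y = s k * delta x y.
Proof.
case: Hb => _ [_ [h _]] hk e hu; have [_ h2] := h x y x' k hk e.
apply: (h2 (inv (delta x y))); first exact: word_len_inv.
by rewrite -(inv_up hk) //; apply: word_len_inv.
Qed.

Lemma adj_sym a b k : is_gen n k -> delta a b = s k -> delta b a = s k.
Proof.
move=> hk e; have [z [h1 h2]] := wd3 a b hk.
by rewrite e sgenK in h2; move/wd1: h2 => <-.
Qed.

Fixpoint gal (ks : seq nat) (x y : C) : Prop :=
  match ks with
  | [::] => x = y
  | k :: ks' => exists z, delta x z = s k /\ gal ks' z y
  end.

Lemma gal_rcons ks k x y z : gal ks x y -> delta y z = s k -> gal (rcons ks k) x z.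
Proof.
elim: ks x => [|k' ks IH] x /=; first by move=> -> e; exists z.
by move=> [u [h1 h2]] e; exists u; split => //; apply: IH.
Qed.

Lemma gal_rev ks x y : all (is_gen n) ks -> gal ks x y -> gal (rev ks) y x.
Proof.
elim: ks x => [|k ks IH] x /=; first by move=> _ ->.
move=> /andP [hk hks] [z [h1 h2]]; rewrite rev_cons.
apply: (gal_rcons (y := z)); first exact: IH.
exact: adj_sym.
Qed.

Lemma gal_delta ks x y : all (is_gen n) ks -> inv (gw n ks) = size ks ->
  gal ks x y -> delta x y = gw n ks.
Proof.
elim: ks x => [|k ks IH] x /=; first by move=> _ _ ->; rewrite gw_nil drefl.
move=> /andP [hk hks]; rewrite gw_cons => hi [z [h1 h2]].
have hb := word_bound hks; have hl := inv_le hk (gw n ks).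
have e : inv (gw n ks) = size ks by lia.
have hz := IH z hks e h2.
rewrite -hz; apply: (wd2_up (x := z)) => //.
rewrite hz; apply: ascent_of => //; lia.
Qed.

Lemma gal_exists x y : exists ks, [/\ all (is_gen n) ks, gw n ks = delta x y,
  size ks = inv (delta x y) & gal ks x y].
Proof.
move: {2}(inv (delta x y)) (erefl (inv (delta x y))) => m.
elim: m x => [|m IH] x hm.
  exists [::]; split => //=; first by rewrite gw_nil (inv_eq0 hm).
  by apply/wd1; apply: inv_eq0.
have w1 : delta x y != 1 by apply/eqP => e; rewrite e inv1 in hm.
have [k [hk hd]] := inv_desc w1.
have [x' [h1 h2]] := wd3 x y hk.
have := inv_down hk hd; rewrite hm -h2 => -[] e.
have [ks [k1 k2 k3 k4]] := IH x' e.
exists (k :: ks); split => /=; first by rewrite hk k1.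
- by rewrite gw_cons k2 h2 mulgA sgenK mul1g.
- by rewrite k3 e.
by exists x'; split => //; apply: adj_sym.
Qed.

Lemma dsym x y : delta y x = (delta x y)^-1.
Proof.
have [ks [k1 k2 k3 k4]] := gal_exists x y.
have := gal_rev k1 k4 => g.
rewrite (gal_delta _ _ g) ?all_rev // gw_rev k2 //.
by rewrite size_rev inv_invg k3.
Qed.

End Bld.

Section Par.
Variable n : nat.
Local Open Scope group_scope.
Local Notation s := (sgen n).

Lemma sgen_in (K : pred nat) k : is_gen n k -> K k -> s k \in Wpar n K.
Proof.
move=> hk hK; apply: mem_gen; apply/imsetP.
have hk' : (k < n.+1)%N by move: hk => /andP []; lia.
exists (Ordinal hk'); last by [].
by rewrite inE /=; move: hk => /andP [-> _].
Qed.

Lemma Wpar_sub (K : pred nat) (G : {group 'S_n.+1}) :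
  (forall k, is_gen n k -> K k -> s k \in G) -> Wpar n K \subset G.
Proof.
move=> H; rewrite gen_subG; apply/subsetP => x /imsetP [k hk ->].
move: hk; rewrite inE => /andP [h1 h2]; apply: H => //.
by rewrite /is_gen h1 -ltnS ltn_ord.
Qed.

Lemma Wpar_mono (K1 K2 : pred nat) :
  (forall k, is_gen n k -> K1 k -> K2 k) -> Wpar n K1 \subset Wpar n K2.
Proof. by move=> H; apply: Wpar_sub => k hk h1; apply: sgen_in => //; apply: H. Qed.

Lemma Wpar_gen (K : pred nat) w : w \in Wpar n K ->
  exists ks, all (fun k => is_gen n k && K k) ks /\ w = gw n ks.
Proof.
move/gen_prodgP => [m [c hc ->]].
elim: m c hc => [|m IH] c hc; first by exists [::]; rewrite big_ord0 gw_nil.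
rewrite big_ord_recl.
have [ks [h1 h2]] := IH (fun i => c (lift ord0 i)) (fun i => hc _).
have := hc ord0 => /imsetP [k hk ->].
move: hk; rewrite inE => /andP [k1 k2].
exists (nat_of_ord k :: ks); split; last by rewrite gw_cons -h2.
by rewrite /= h1 k2 /is_gen k1 -ltnS ltn_ord.
Qed.

Definition presS (P : pred 'I_n.+1) := [set w : 'S_n.+1 | [forall p, P p ==> P (w p)]].
Lemma presS_group P : group_set (presS P).
Proof.
apply/group_setP; split; first by rewrite inE; apply/forallP => p; rewrite perm1; apply/implyP.
move=> x y; rewrite !inE => /forallP hx /forallP hy; apply/forallP => p; apply/implyP => hp.
by rewrite permM; have := implyP (hy (x p)); apply; have := implyP (hx p); apply.
Qed.
Canonical presG P := Group (presS_group P).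

Definition fixS (P : pred 'I_n.+1) := [set w : 'S_n.+1 | [forall p, P p ==> (w p == p)]].
Lemma fixS_group P : group_set (fixS P).
Proof.
apply/group_setP; split; first by rewrite inE; apply/forallP => p; rewrite perm1; apply/implyP.
move=> x y; rewrite !inE => /forallP hx /forallP hy; apply/forallP => p; apply/implyP => hp.
rewrite permM; have /eqP -> := implyP (hx p) hp; exact: (implyP (hy p) hp).
Qed.
Canonical fixG P := Group (fixS_group P).

Lemma w0E (x : 'I_n.+1) : w0 n x = rev_ord x.
Proof. by rewrite /w0 permE. Qed.

Lemma w0K : w0 n * w0 n = 1.
Proof. by apply/permP => x; rewrite permM !w0E rev_ordK perm1. Qed.

Lemma w0V : (w0 n)^-1 = w0 n.
Proof. by rewrite -[LHS]mulg1 -w0K mulgA mulVg mul1g. Qed.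

Lemma w0_sgen k : is_gen n k -> w0 n * s k * w0 n = s (n.+1 - k).
Proof.
move=> hk.
have -> : w0 n * s k * w0 n = (s k) ^ (w0 n) by rewrite conjgE w0V mulgA.
rewrite /sgen tpermJ tpermC !w0E; move: hk => /andP [h1 h2].
congr tperm; apply: val_inj; rewrite /= ?inordV; lia.
Qed.

Lemma Wpar_w0 (K : pred nat) w :
  (forall k, is_gen n k -> K k -> K (n.+1 - k)) ->
  w \in Wpar n K -> w0 n * w * w0 n \in Wpar n K.
Proof.
move=> hs /Wpar_gen [ks [h1 ->]]; elim: ks h1 => [|k ks IH] /=.
  by rewrite gw_nil mulg1 w0K group1.
move=> /andP [/andP [hk hK] hks]; rewrite gw_cons.
have -> : w0 n * (s k * gw n ks) * w0 n = (w0 n * s k * w0 n) * (w0 n * gw n ks * w0 n).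
  by rewrite !mulgA -(mulgA _ (w0 n) (w0 n)) w0K mulg1.
rewrite groupM ?IH // w0_sgen //; apply: sgen_in; last exact: hs.
by move: hk => /andP []; rewrite /is_gen; lia.
Qed.

End Par.

Section Bld2.
Variables (n : nat) (C : Type) (delta : C -> C -> 'S_n.+1).
Hypothesis Hb : is_building delta.
Local Open Scope group_scope.
Local Notation s := (sgen n).

Lemma reach_ks (K : pred nat) ks x y y2 : all (fun k => is_gen n k && K k) ks ->
  exists x', delta x' y = gw n ks * delta x y /\
             delta x' y2 * (delta x y2)^-1 \in Wpar n K.
Proof.
elim: ks => [|k ks IH] /=.
  by move=> _; exists x; rewrite gw_nil mul1g mulgV group1.
move=> /andP [/andP [hk hK] /IH [x'' [h1 h2]]].
have [x' [e1 e2]] := wd3 Hb x'' y hk.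
exists x'; split; first by rewrite e2 h1 gw_cons mulgA.
have [e|e] := wd2 Hb y2 hk e1; rewrite e //.
by rewrite -mulgA groupM // sgen_in.
Qed.

Lemma reach (K : pred nat) u x y y2 : u \in Wpar n K ->
  exists x', delta x' y = u * delta x y /\
             delta x' y2 * (delta x y2)^-1 \in Wpar n K.
Proof. by move=> /Wpar_gen [ks [h ->]]; apply: reach_ks. Qed.

Lemma resL (K : pred nat) x x' y : delta x' x \in Wpar n K ->
  delta x' y * (delta x y)^-1 \in Wpar n K.
Proof.
move=> h.
have hu : (delta x x')^-1 \in Wpar n K by rewrite (dsym Hb x' x) invgK in h *.
have [z [h1 h2]] := reach x x' y hu.
by rewrite mulVg in h1; move/(wd1 Hb): h1 => <-.
Qed.

Lemma resR (K : pred nat) x y y' : delta y y' \in Wpar n K ->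
  (delta x y)^-1 * delta x y' \in Wpar n K.
Proof.
move=> h.
have h' : delta y' y \in Wpar n K by rewrite (dsym Hb y y') groupV.
have := resL x h'; rewrite (dsym Hb x y') (dsym Hb x y) invgK => h2.
by rewrite -groupV invMg invgK.
Qed.

End Bld2.

Section Types.
Variables (n i : nat).
Hypotheses (hi1 : (1 <= i)%N) (hi2 : (2 * i <= n.+1)%N).
Local Open Scope group_scope.
Local Notation s := (sgen n).

Definition Kp : pred nat := fun k => k \notin type_pair n i.
Definition Lp : pred nat := fun k => (k < i)%N.
Definition Mp : pred nat := fun k => k \notin type_upto n i.

Lemma notin_upto k : (k \notin type_upto n i) = ~~ type_upto n i k.
Proof. by []. Qed.

Lemma upto_iff k : is_gen n k -> type_upto n i k = (k <= i)%N || (n.+1 - i <= k)%N.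
Proof.
move=> /andP [h1 h2]; rewrite /type_upto; apply/hasP/idP.
  move=> [j]; rewrite mem_iota => /andP [j1 j2] /orP [] /eqP ->; apply/orP; lia.
move=> /orP [h|h].
  by exists k; rewrite ?mem_iota ?eqxx //; apply/andP; lia.
exists (n.+1 - k); first by rewrite mem_iota; apply/andP; lia.
by apply/orP; right; apply/eqP; lia.
Qed.

Lemma Kp_sym k : is_gen n k -> Kp k -> Kp (n.+1 - k).
Proof. move=> /andP [h1 h2]; rewrite /Kp /type_pair unfold_in /= => /norP [/eqP a /eqP b]; apply/norP; split; apply/eqP; lia. Qed.

Lemma Mp_sym k : is_gen n k -> Mp k -> Mp (n.+1 - k).
Proof.
move=> hk; have := hk => /andP [h1 h2]; rewrite /Mp !notin_upto (upto_iff hk) => /norP [a b].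
rewrite upto_iff; last by rewrite /is_gen; apply/andP; lia.
apply/norP; split; lia.
Qed.

Lemma L_sub_K : Wpar n Lp \subset Wpar n Kp.
Proof.
apply: Wpar_mono => k /andP [h1 h2]; rewrite /Lp /Kp /type_pair unfold_in /= => h.
apply/norP; split; apply/eqP; lia.
Qed.

Lemma sgen_val k (hk : is_gen n k) (p : 'I_n.+1) :
  (s k p : nat) = if (p : nat) == k.-1 then k else if (p : nat) == k then k.-1 else p.
Proof.
have [ea eb] := gen_ab hk.
rewrite /sgen; case: tpermP => [->|->|/eqP n1 /eqP n2]; rewrite ?ea ?eb ?eqxx //.
  have -> : (k == k.-1) = false by move: hk => /andP []; lia.
  by [].
move: n1 n2; rewrite -!(inj_eq val_inj) /= ea eb => /negbTE -> /negbTE -> //.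
Qed.

Lemma A1 w (p : 'I_n.+1) : w \in Wpar n Kp -> (p < i)%N -> (w p < i)%N.
Proof.
move=> hw hp.
have : w \in presG (fun p : 'I_n.+1 => (p < i)%N).
  apply: (subsetP (Wpar_sub _)) hw => k hk; rewrite /Kp /type_pair unfold_in /= => /norP [/eqP a /eqP b].
  rewrite inE; apply/forallP => q; apply/implyP => hq; rewrite sgen_val //.
  move: hk => /andP [h1 h2]; case: ifP => /eqP; [lia|]; case: ifP => /eqP; lia.
by rewrite inE => /forallP /(_ p) /implyP; apply.
Qed.

Lemma A2 w (p : 'I_n.+1) : w \in Wpar n Kp -> (n.+1 - i <= p)%N -> (n.+1 - i <= w p)%N.
Proof.
move=> hw hp.
have : w \in presG (fun p : 'I_n.+1 => (n.+1 - i <= p)%N).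
  apply: (subsetP (Wpar_sub _)) hw => k hk; rewrite /Kp /type_pair unfold_in /= => /norP [/eqP a /eqP b].
  rewrite inE; apply/forallP => q; apply/implyP => hq; rewrite sgen_val //.
  move: hk => /andP [h1 h2]; case: ifP => /eqP; [lia|]; case: ifP => /eqP; lia.
by rewrite inE => /forallP /(_ p) /implyP; apply.
Qed.

Lemma A3 w (p : 'I_n.+1) : w \in Wpar n Lp -> (i <= p)%N -> w p = p.
Proof.
move=> hw hp.
have : w \in fixG (fun p : 'I_n.+1 => (i <= p)%N).
  apply: (subsetP (Wpar_sub _)) hw => k hk; rewrite /Lp => hki.
  rewrite inE; apply/forallP => q; apply/implyP => hq; rewrite -(inj_eq val_inj) /= sgen_val //.
  move: hk => /andP [h1 h2]; case: ifP => /eqP; [lia|]; case: ifP => /eqP; [lia|by []].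
by rewrite inE => /forallP /(_ p) /implyP /(_ hp) /eqP.
Qed.

End Types.

Section Types2.
Variables (n i : nat).
Hypotheses (hi1 : (1 <= i)%N) (hi2 : (2 * i <= n.+1)%N).
Local Open Scope group_scope.
Local Notation s := (sgen n).

Definition outer (p : nat) := (p < i)%N || (n - i < p)%N.

Lemma fixed_inj (t : 'S_n.+1) (x p : 'I_n.+1) : t p = p -> t x = p -> x = p.
Proof. by move=> h1 h2; apply: (@perm_inj _ t); rewrite h1 h2. Qed.

Lemma A4 (t : 'S_n.+1) : (forall p : 'I_n.+1, outer p -> t p = p) -> t \in Wpar n (Mp n i).
Proof.
move: {2}(inv t) (erefl (inv t)) => m; elim: m t => [|m IH] t hm ht.
  by rewrite (inv_eq0 hm) group1.
have t1 : t != 1 by apply/eqP => e; rewrite e inv1 in hm.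
have [k [hk hd]] := inv_desc t1.
have [ea eb] := gen_ab hk.
have hkM : (i < k)%N && (k <= n - i)%N.
  move: hk => /andP [h1 h2].
  case: (ltnP i k) => hik; last first.
    have fa : t (inord k.-1) = inord k.-1 by apply: ht; rewrite /outer ea; apply/orP; left; lia.
    case: (ltnP k i) => hki.
      have fb : t (inord k) = inord k by apply: ht; rewrite /outer eb; apply/orP; left; lia.
      by move: hd; rewrite fa fb ea eb; lia.
    have fq : t (t (inord k)) = t (inord k).
      apply: ht; rewrite /outer; apply/orP; left; move: hd; rewrite fa ea; lia.
    have := fixed_inj fq (erefl _) => /(congr1 (@nat_of_ord _)).
    move: hd; rewrite fa ea eb; lia.
  case: (leqP k (n - i)) => // hkn.
  have fb : t (inord k) = inord k by apply: ht; rewrite /outer eb; apply/orP; right; lia.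
  case: (ltnP (n - i) k.-1) => hk1.
    have fa : t (inord k.-1) = inord k.-1 by apply: ht; rewrite /outer ea; apply/orP; right; lia.
    by move: hd; rewrite fa fb ea eb; lia.
  have fq : t (t (inord k.-1)) = t (inord k.-1).
    apply: ht; rewrite /outer; apply/orP; right; move: hd; rewrite fb eb; lia.
  have := fixed_inj fq (erefl _) => /(congr1 (@nat_of_ord _)).
  move: hd; rewrite fb ea eb; lia.
have sM : s k \in Wpar n (Mp n i).
  apply: sgen_in => //; rewrite /Mp notin_upto upto_iff //.
  move: hkM => /andP [a b]; apply/norP; split; lia.
have e := inv_down hk hd; rewrite hm in e; case: e => e.
have -> : t = s k * (s k * t) by rewrite mulgA sgenK mul1g.
rewrite groupM // (IH _ e) // => p hp; rewrite permM.
have -> : s k p = p.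
  apply: val_inj => /=; rewrite (sgen_val hi1 hi2 hk); move: hp hkM; rewrite /outer.
  by case: ifP => /eqP; [lia|]; case: ifP => /eqP; lia.
exact: ht.
Qed.

End Types2.

Lemma inv_bound n (w : 'S_n.+1) : (inv w <= n.+1 * n.+1)%N.
Proof.
rewrite /inv; apply: (@leq_trans (\sum_(pq : 'I_n.+1 * 'I_n.+1) 1)).
  by apply: leq_sum => pq _; case: (_ && _).
by rewrite sum1_card card_prod card_ord.
Qed.

Section Step2.
Variables (n : nat) (C : Type) (delta : C -> C -> 'S_n.+1).
Hypotheses (Hb : is_building delta) (Ht : thick delta).
Local Open Scope group_scope.
Local Notation s := (sgen n).

Lemma panel_step x y1 y2 k : is_gen n k ->
  (delta x y1 (inord k.-1) < delta x y1 (inord k))%N ->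
  exists x', [/\ delta x' x = s k, inv (delta x' y1) = (inv (delta x y1)).+1
              & (inv (delta x y2) <= inv (delta x' y2))%N].
Proof.
move=> hk hu.
have [y' [z' [ne [e1 e2]]]] := Ht x hk.
have a1 := adj_sym Hb hk e1; have a2 := adj_sym Hb hk e2.
have up v : delta v x = s k -> inv (delta v y1) = (inv (delta x y1)).+1.
  by move=> ev; rewrite (wd2_up Hb hk ev hu) inv_up.
have := ab_neq hk (delta x y2); rewrite neq_ltn => /orP [hu2|hd2].
  exists y'; split => //; first exact: up.
  by have [->|->] := wd2 Hb y2 hk a1; rewrite ?inv_up //; lia.
have [ey|ey] := wd2 Hb y2 hk a1; last by exists y'; rewrite ey; split => //; apply: up.
exists z'; split => //; first exact: up.
have ezy : delta z' y' = s k.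
  have [ez|ez] := wd2 Hb y' hk a2; rewrite e1 ?sgenK in ez => //.
  by move/(wd1 Hb): ez => ez; case: ne.
rewrite (wd2_up Hb (x := y') hk ezy); first by rewrite ey mulgA sgenK mul1g.
rewrite ey !permM /sgen tpermL tpermR; exact: hd2.
Qed.

Lemma step2 (L : pred nat) c y1 y2 x : delta x c \in Wpar n L ->
  exists b, delta b c \in Wpar n L /\
    forall k, is_gen n k -> L k ->
      (delta b y1 (inord k) < delta b y1 (inord k.-1))%N /\
      (delta b y2 (inord k) < delta b y2 (inord k.-1))%N.
Proof.
set Bd := (n.+1 * n.+1)%N.
pose pot x := (inv (delta x y1) + inv (delta x y2))%N.
have potB x' : (pot x' <= Bd + Bd)%N by rewrite /pot leq_add ?inv_bound.
move: (leqnn (Bd + Bd - pot x)); move: {2}(Bd + Bd - pot x) => N.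
elim: N x => [|N IH] x hN hx.
  - case: (boolP [exists k : 'I_n.+1, [&& (0 < k)%N, L k &
        ~~ ((delta x y1 (inord k) < delta x y1 (inord k.-1))%N &&
            (delta x y2 (inord k) < delta x y2 (inord k.-1))%N)]]).
    + move=> /existsP [k /and3P [k0 kL hk]].
      have gk : is_gen n k by rewrite /is_gen k0 -ltnS ltn_ord.
      exfalso; move: hk; rewrite negb_and => /orP [] hk.
      * have hu : (delta x y1 (inord k.-1) < delta x y1 (inord k))%N.
          by have := ab_neq gk (delta x y1); rewrite neq_ltn => /orP [//|h]; rewrite h in hk.
        have [x' [_ h1 h2]] := panel_step y2 gk hu.
        have := potB x'; rewrite /pot h1; move: hN; rewrite /pot; lia.
      * have hu : (delta x y2 (inord k.-1) < delta x y2 (inord k))%N.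
          by have := ab_neq gk (delta x y2); rewrite neq_ltn => /orP [//|h]; rewrite h in hk.
        have [x' [_ h1 h2]] := panel_step y1 gk hu.
        have := potB x'; rewrite /pot h1; move: hN; rewrite /pot; lia.
    + rewrite negb_exists => /forallP H; exists x; split => // k gk hL.
      have k1 : (k < n.+1)%N by move: gk => /andP []; lia.
      have := H (Ordinal k1); rewrite /= hL; move: gk => /andP [-> _] /=.
      by rewrite negbK => /andP.
case: (boolP [exists k : 'I_n.+1, [&& (0 < k)%N, L k &
        ~~ ((delta x y1 (inord k) < delta x y1 (inord k.-1))%N &&
            (delta x y2 (inord k) < delta x y2 (inord k.-1))%N)]]).
  move=> /existsP [k /and3P [k0 kL hk]].
  have gk : is_gen n k by rewrite /is_gen k0 -ltnS ltn_ord.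
  have sL : s k \in Wpar n L by apply: sgen_in.
  have hx' x' : delta x' x = s k -> delta x' c \in Wpar n L.
    by move=> e; have [->|->] := wd2 Hb c gk e; rewrite ?groupM.
  move: hk; rewrite negb_and => /orP [] hk.
  - have hu : (delta x y1 (inord k.-1) < delta x y1 (inord k))%N.
      by have := ab_neq gk (delta x y1); rewrite neq_ltn => /orP [//|h]; rewrite h in hk.
    have [x' [e h1 h2]] := panel_step y2 gk hu.
    apply: (IH x') (hx' _ e); have := potB x'; move: hN; rewrite /pot h1; lia.
  - have hu : (delta x y2 (inord k.-1) < delta x y2 (inord k))%N.
      by have := ab_neq gk (delta x y2); rewrite neq_ltn => /orP [//|h]; rewrite h in hk.
    have [x' [e h1 h2]] := panel_step y1 gk hu.
    apply: (IH x') (hx' _ e); have := potB x'; move: hN; rewrite /pot h1; lia.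
rewrite negb_exists => /forallP H; exists x; split => // k gk hL.
have k1 : (k < n.+1)%N by move: gk => /andP []; lia.
have := H (Ordinal k1); rewrite /= hL; move: gk => /andP [-> _] /=.
by rewrite negbK => /andP.
Qed.

End Step2.

Theorem lemma3p8 (n : nat) (C : Type) (delta : C -> C -> 'S_n.+1)
    (Hb : is_building delta) (Ht : thick delta)
    (theta : C -> C) (Hcol : collineation delta theta)
    (Hdom : domestic delta theta)
    (i : nat) (hi1 : (1 <= i)%N) (hi2 : (2 * i <= n.+1)%N)
    (A : C -> Prop) (HA : is_simplex delta (type_pair n i) A)
    (HAopp : opp_simplex delta A (img theta A)) :
  exists B : C -> Prop,
    is_simplex delta (type_upto n i) B /\ opp_simplex delta B (img theta B).
Proof.
Local Open Scope group_scope.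
case: Hcol => [[thi k1 k2] Hp].
have Hp' x y : delta (thi x) (thi y) = delta x y by rewrite -Hp !k2.
have ds := dsym Hb.
case: HA => c [Ac HAc].
have HAc' d : A d <-> delta c d \in Wpar n (Kp n i) by apply: HAc.
case: HAopp => [H1 _].
have [y0 [[d0 [Ad0 ->]] hy0]] := H1 c Ac.
rewrite /opp_ch in hy0.
set g := delta c (theta c).
have hg : w0 n * g \in Wpar n (Kp n i).
  have h : delta (theta d0) (theta c) \in Wpar n (Kp n i).
    by rewrite Hp ds groupV; apply/HAc'.
  by have := resR Hb c h; rewrite hy0 w0V.
have [b [hbc hdesc]] := @step2 n C delta Hb Ht (Lp i) c (theta c) (thi c) c ltac:(by rewrite (drefl Hb) group1).
set u1 := delta b (theta c).
set u2 := delta b (thi c).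
have LK : forall w, w \in Wpar n (Lp i) -> w \in Wpar n (Kp n i).
  by move=> w; apply: (subsetP (L_sub_K hi1 hi2)).
have KS := Kp_sym hi1 hi2.
have l1 : u1 * g^-1 \in Wpar n (Lp i) by exact: (resL Hb (theta c) hbc).
set h := u1 * w0 n.
have hK : h \in Wpar n (Kp n i).
  have -> : h = (u1 * g^-1) * (w0 n * (w0 n * g) * w0 n).
    by rewrite /h !mulgA -(mulgA (u1 * g^-1) (w0 n) (w0 n)) w0K mulg1 mulgVK.
  by rewrite groupM //; [exact: (LK _ l1) | exact: Wpar_w0].
have hfix : forall p : 'I_n.+1, (p < i)%N -> h p = p.
  have E : forall p : 'I_n.+1, (p < i)%N -> (h p < i)%N by move=> p; apply: (A1 hi1 hi2 hK).
  have M : forall p, (0 <= p <= i.-1)%N -> nat_of_ord (h (inord p)) = p.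
    apply: (@mono_id (fun p => nat_of_ord (h (inord p))) 0 i.-1).
      move=> p hp; have := E (inord p); rewrite inordV; [|lia]; lia.
    move=> p /andP [hp0 hp].
    have gk : is_gen n p by rewrite /is_gen; apply/andP; lia.
    have [hd _] := hdesc p gk ltac:(rewrite /Lp; lia).
    move: hd; rewrite /u1 -/u1.
    have -> : u1 = h * w0 n by rewrite /h -mulgA w0K mulg1.
    rewrite !permM !w0E /=.
    have := ltn_ord (h (inord p)); have := ltn_ord (h (inord p.-1)); lia.
  move=> p hp; apply: val_inj => /=; have := M p; rewrite inord_val; apply; lia.
have eu2 : delta c (thi c) = g^-1 by rewrite -Hp k2 ds.
have l2 : u2 * g \in Wpar n (Lp i).
  by have := resL Hb (thi c) hbc; rewrite eu2 invgK.
set h2 := u2^-1 * w0 n.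
have h2K : h2 \in Wpar n (Kp n i).
  have -> : h2 = w0 n * ((w0 n * g) * (u2 * g)^-1) * w0 n.
    by rewrite /h2 invMg !mulgA w0K mul1g mulgV mul1g.
  apply: Wpar_w0 => //; rewrite groupM // groupV; exact: (LK _ l2).
have h2fix : forall p : 'I_n.+1, (n.+1 - i <= p)%N -> h2 p = p.
  have E : forall p : 'I_n.+1, (n.+1 - i <= p)%N -> (n.+1 - i <= h2^-1 p)%N.
    by move=> p; apply: (A2 hi1 hi2); rewrite groupV.
  have eu : u2 = w0 n * h2^-1 by rewrite /h2 invMg invgK w0V mulgA w0K mul1g.
  have M : forall p, (n.+1 - i <= p <= n)%N -> nat_of_ord (h2^-1 (inord p)) = p.
    apply: (@mono_id (fun p => nat_of_ord (h2^-1 (inord p))) (n.+1 - i) n).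
      move=> p hp; have := E (inord p); rewrite inordV; [|lia].
      have := ltn_ord (h2^-1 (inord p)); lia.
    move=> p /andP [hp0 hp].
    have gk : is_gen n (n.+1 - p) by rewrite /is_gen; apply/andP; lia.
    have [_ hd] := hdesc _ gk ltac:(rewrite /Lp; lia).
    move: hd; rewrite -/u2 eu !permM.
    have -> : w0 n (inord (n.+1 - p)) = inord p.-1 by apply: val_inj; rewrite w0E /= !inordV; lia.
    have -> : w0 n (inord (n.+1 - p).-1) = inord p by apply: val_inj; rewrite w0E /= !inordV; lia.
    by [].
  move=> p hp; have e : h2^-1 p = p.
    apply: val_inj => /=; have := M p; rewrite inord_val; apply; have := ltn_ord p; lia.
  by rewrite -{1}e permKV.
set v := delta b (theta b).
have r0 : u1^-1 * v \in Wpar n (Lp i).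
  apply: (resR Hb b (y := theta c) (y' := theta b)).
  by rewrite Hp ds groupV.
have l' : v * u2 \in Wpar n (Lp i).
  have := resL Hb b (K := Lp i) (x := thi c) (x' := thi b) ltac:(by rewrite Hp').
  have -> : delta (thi b) b = v by rewrite /v -Hp k2.
  by rewrite (ds b (thi c)) invgK.
set t := v * w0 n.
have tfix : forall p : 'I_n.+1, outer n i p -> t p = p.
  move=> p /orP [hp|hp].
    have -> : t = h * w0 n * (u1^-1 * v) * w0 n by rewrite /h -(mulgA u1) w0K mulg1 mulKVg.
    rewrite 3!permM hfix // (A3 hi1 hi2 r0); first by rewrite !w0E rev_ordK.
    rewrite w0E /=; lia.
  have -> : t = (v * u2) * h2 by rewrite /h2 !mulgA mulgK.
  rewrite permM (A3 hi1 hi2 l'); last lia.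
  by rewrite h2fix //; lia.
have tM := A4 hi1 hi2 tfix.
have MS := Mp_sym hi1 hi2.
exists (fun d => delta b d \in Wpar n (fun k => k \notin type_upto n i)).
split.
  by exists b; split => //; rewrite (drefl Hb) group1.
split.
  move=> x hx; change (is_true (delta b x \in Wpar n (Mp n i))) in hx.
  have hxb : delta x b \in Wpar n (Mp n i) by rewrite ds groupV.
  have m1 := resL Hb (theta b) hxb.
  set dx := delta x (theta b) in m1.
  have hm : w0 n * dx \in Wpar n (Mp n i).
    have -> : w0 n * dx = w0 n * (dx * v^-1 * t) * w0 n.
      by rewrite /t !mulgA mulgVK -(mulgA _ (w0 n) (w0 n)) w0K mulg1.
    by apply: Wpar_w0 => //; rewrite groupM.
  have [z [ez hz]] := reach Hb (theta b) x (theta b) hm.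
  rewrite (drefl Hb) invg1 mulg1 in hz.
  rewrite (ds x (theta b)) -/dx mulgK in ez.
  exists z; split.
    exists (thi z); split; last by rewrite k2.
    by rewrite -Hp k2 ds groupV.
  by rewrite /opp_ch ds ez w0V.
move=> y [d [hd ->]]; change (is_true (delta b d \in Wpar n (Mp n i))) in hd.
have h0 : delta (theta d) (theta b) \in Wpar n (Mp n i) by rewrite Hp ds groupV.
have m1 := resL Hb b h0.
rewrite (ds b (theta b)) -/v invgK in m1.
set dy := delta (theta d) b in m1.
have hm : w0 n * dy \in Wpar n (Mp n i).
  have -> : w0 n * dy = w0 n * (dy * v) * w0 n * t^-1.
    by rewrite /t invMg w0V !mulgA -(mulgA _ (w0 n) (w0 n)) w0K mulg1 mulgK.
  by rewrite groupM ?groupV // Wpar_w0.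
have [z [ez hz]] := reach Hb b (theta d) b hm.
rewrite (drefl Hb) invg1 mulg1 in hz.
rewrite (ds (theta d) b) -/dy mulgK in ez.
exists z; split; first by rewrite ds groupV.
by rewrite /opp_ch ds ez w0V.
Qed.
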